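(* Let $\sigma\ge 2$, $k\ge 1$, let $U$ be any rotation of a $\sigma$-ary de Bruijn cycle of order $k$, and let $w_{\mathrm{lin}}=U\,U[0..k-2]$, a word of length $\sigma^k+(k-1)$. Then $\operatorname{sre}(w_{\mathrm{lin}})=\sigma^k$.
   Context: A $\sigma$-ary de Bruijn cycle of order $k$ is a cyclic word of length $\sigma^k$ over an alphabet $\Sigma$ of size $\sigma$ in which every word of $\Sigma^k$ occurs exactly once as a cyclic length-$k$ window. Strings are $0$-indexed; $U[0..k-2]$ is empty when $k=1$. For a string $w$, a substring $x$ (possibly empty) is right-maximal if there are distinct $a,b\in\Sigma$ with $xa$ and $xb$ both substrings of $w$; the set of right-extensions is $E_r(w)=\{xa : a\in\Sigma,\ \exists b\ne a \text{ with } xa, xb \text{ substrings of } w\}$. The set of super-maximal extensions is $S_r(w)=\{x\in E_r(w): \text{for all } y\in E_r(w),\ y=zx \Rightarrow z \text{ is empty}\}$, i.e. right-extensions that are not proper suffixes of other right-extensions, and $\operatorname{sre}(w)=|S_r(w)|$. *)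

(* Defs.v *)
From mathcomp Require Import all_boot.
Set Implicit Arguments. Unset Strict Implicit. Unset Printing Implicit Defensive.

Definition cyc_window (T : Type) (k : nat) (U : seq T) (i : nat) : seq T :=
  if U is x :: _ then [seq nth x U ((i + j) %% size U) | j <- iota 0 k] else [::].

Definition de_bruijn_cycle (sigma k : nat) (U : seq 'I_sigma) : Prop :=
  size U = sigma ^ k /\
  forall x : seq 'I_sigma, size x = k ->
    count (fun i => cyc_window k U i == x) (iota 0 (size U)) = 1.

Definition substrings (T : eqType) (w : seq T) : seq (seq T) :=
  undup [seq take l (drop i w) | i <- iota 0 (size w).+1, l <- iota 0 (size w).+1].

Definition is_right_ext (sigma : nat) (w y : seq 'I_sigma) : bool :=
  match y with
  | z :: t =>
      let x := belast z t in
      let a := last z t in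
      [exists b : 'I_sigma, [&& b != a, infix (rcons x a) w & infix (rcons x b) w]]
  | [::] => false
  end.

Definition right_exts (sigma : nat) (w : seq 'I_sigma) : seq (seq 'I_sigma) :=
  [seq y <- substrings w | is_right_ext w y].

Definition super_max_exts (sigma : nat) (w : seq 'I_sigma) : seq (seq 'I_sigma) :=
  [seq x <- right_exts w |
     all (fun y => suffix x y ==> (y == x)) (right_exts w)].

Definition sre (sigma : nat) (w : seq 'I_sigma) : nat := size (super_max_exts w).
Arguments de_bruijn_cycle : clear implicits.

(* Main.v *)
Require Import Defs.
From mathcomp Require Import all_boot zify.
Set Implicit Arguments. Unset Strict Implicit.

Lemma infix_substrings (T : eqType) (w y : seq T) : infix y w -> y \in substrings w.
Proof.
case/infixP=> s1 [s2 Hw]; rewrite /substrings mem_undup; apply/allpairsP.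
exists (size s1, size y); split => /=.
- rewrite inE mem_iota Hw !size_cat; lia.
- rewrite inE mem_iota Hw !size_cat; lia.
- by rewrite Hw drop_size_cat // take_size_cat.
Qed.

Lemma suffix_same_size (T : eqType) (x y : seq T) :
  suffix x y -> size y <= size x -> x = y.
Proof.
case/suffixP=> s ->; rewrite size_cat => H.
by have -> : s = [::] by apply/nilP; rewrite /nilp; apply/eqP; lia.
Qed.

Lemma count_one_uniq (p : pred nat) n i j :
  count p (iota 0 n) = 1 -> i < n -> j < n -> p i -> p j -> i = j.
Proof.
move=> Hc Hi Hj Pi Pj; apply/eqP; apply/negPn/negP => Hne.
have : size [:: i; j] <= size (filter p (iota 0 n)).
  apply: uniq_leq_size; first by rewrite /= inE Hne.
  move=> z; rewrite !inE mem_filter mem_iota => /orP[]/eqP->; apply/andP; split => //; lia.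
by rewrite size_filter Hc.
Qed.

Theorem lemma5 (sigma k : nat) (V : seq 'I_sigma) (r : nat) :
  2 <= sigma -> 1 <= k -> de_bruijn_cycle sigma k V ->
  let U := rot r V in
  let w_lin := U ++ take (k - 1) U in
  sre w_lin = sigma ^ k.
Proof.
move=> Hs Hk [HV HDB] U w.
have kn : k < size V by rewrite HV ltn_expl.
case: V HV HDB @U @w kn => [|v0 V'] HV HDB U w kn; first by [].
set V := v0 :: V' in HV HDB U w kn *.
set n := size V in HV HDB kn *.
have Hn : size V = n by [].
clearbody n.
have n0 : 0 < n by lia.
pose s := if r < n then r else 0.
have sn : s < n by rewrite /s; case: ifP.
have HU : forall m, m < n -> nth v0 U m = nth v0 V ((m + s) %% n).
  move=> m mn; rewrite /U /s; case: ltnP => rn /=.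
  - rewrite /rot nth_cat size_drop Hn.
    case: ltnP => H.
    + by rewrite nth_drop modn_small 1?addnC //; lia.
    + rewrite nth_take; last by lia.
      have -> : m + r = (m - (n - r)) + n by lia.
      by rewrite modnDr modn_small //; lia.
  - by rewrite rot_oversize ?Hn // addn0 modn_small.
have sizeU : size U = n by rewrite size_rot.
have sizew : size w = n + (k - 1) by rewrite size_cat size_take sizeU; case: ltnP; lia.
have Hw : forall m, m < n + (k - 1) -> nth v0 w m = nth v0 V ((m + s) %% n).
  move=> m mn; rewrite nth_cat sizeU; case: ltnP => H; first exact: HU.
  rewrite nth_take; last by lia.
  rewrite HU; last by lia.
  have -> : m + s = (m - n + s) + n by lia.
  by rewrite modnDr.
have CW : forall i, cyc_window k V i = [seq nth v0 V ((i + j) %% n) | j <- iota 0 k].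
  by move=> i; rewrite -Hn.
have CWmod : forall i, cyc_window k V i = cyc_window k V (i %% n).
  by move=> i; rewrite !CW; apply: eq_map => j; rewrite modnDml.
have Win : forall p, p < n -> take k (drop p w) = cyc_window k V (p + s).
  move=> p pn; apply: (@eq_from_nth _ v0).
    by rewrite size_take size_drop sizew CW size_map size_iota; case: ltnP; lia.
  move=> j; rewrite size_take size_drop sizew => Hj.
  have jk : j < k by move: Hj; case: (ltnP k); lia.
  rewrite nth_take // nth_drop Hw; last by lia.
  rewrite CW (nth_map 0) ?size_iota // nth_iota // add0n.
  by rewrite addnAC.
have DB1 : forall x, size x = k -> exists2 i, i < n & cyc_window k V i = x.
  move=> x Hx; have Hc := HDB x Hx.
  have : has (fun i => cyc_window k V i == x) (iota 0 n) by rewrite has_count Hc.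
  by case/hasP => i; rewrite mem_iota => /andP[_ Hi] /eqP <-; exists i.
have DB2 : forall i j, i < n -> j < n -> cyc_window k V i = cyc_window k V j -> i = j.
  move=> i j Hi Hj E.
  have Hsz : size (cyc_window k V j) = k by rewrite CW size_map size_iota.
  have Hc := HDB (cyc_window k V j) Hsz.
  by apply: (count_one_uniq Hc Hi Hj); rewrite ?E.
have A : forall x, size x = k -> infix x w.
  move=> x Hx; case: (DB1 x Hx) => i0 Hi0 <-.
  pose p := (i0 + (n - s)) %% n.
  have -> : cyc_window k V i0 = take k (drop p w).
    rewrite Win ?ltn_pmod // [RHS]CWmod /p modnDml.
    have -> : i0 + (n - s) + s = i0 + n by lia.
    by rewrite modnDr modn_small.
  have E : w = take p w ++ take k (drop p w) ++ drop k (drop p w) by rewrite !cat_take_drop.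
  by rewrite {2}E; exact: infix_infix.
have B : forall p q, p < n -> q < n -> take k (drop p w) = take k (drop q w) -> p = q.
  move=> p q Hp Hq; rewrite !Win // (CWmod (p + s)) (CWmod (q + s)) => /DB2.
  move=> /(_ (ltn_pmod _ n0) (ltn_pmod _ n0)) /eqP.
  by rewrite eqn_modDr !modn_small // => /eqP.
have D : forall x a b, infix (rcons x a) w -> infix (rcons x b) w -> k <= size x -> a = b.
  move=> x a b H1 H2 Hx.
  case/infixP: H1 => s1 [s2 E1]; case/infixP: H2 => t1 [t2 E2].
  have ar : forall a1 m a2, k <= m -> a1 + (m.+1 + a2) = n + (k - 1) -> a1 < n by move=> *; lia.
  have Hp : size s1 < n by move: sizew; rewrite E1 !size_cat size_rcons; exact: ar.
  have Hq : size t1 < n by move: sizew; rewrite E2 !size_cat size_rcons; exact: ar.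
  have T1 : take k (drop (size s1) w) = take k x.
    by rewrite {1}E1 drop_size_cat // -cats1 -catA takel_cat.
  have T2 : take k (drop (size t1) w) = take k x.
    by rewrite {1}E2 drop_size_cat // -cats1 -catA takel_cat.
  have Hst : size s1 = size t1 by apply: B; rewrite // T1 T2.
  move: E2; rewrite E1 => /eqP; rewrite eqseq_cat // => /andP[_].
  rewrite eqseq_cat ?size_rcons // => /andP[/eqP + _].
  by case/rcons_inj.
have Pad : forall (x : seq 'I_sigma) c, size x < k -> infix (rcons x c) w.
  move=> x c Hx.
  have Hsz : size (rcons x c ++ nseq (k - (size x).+1) c) = k.
    rewrite size_cat size_rcons size_nseq; move: (size x) Hx => m Hm; lia.
  exact: (infix_trans (prefix_infix _ _) (A _ Hsz)).
have Hb : forall a : 'I_sigma, exists b : 'I_sigma, b != a.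
  move=> a; case: (val a =P 0) => Ha.
  - exists (Ordinal Hs); apply/negP => /eqP E; by move: Ha; rewrite -E.
  - exists (Ordinal (ltnW Hs)); apply/negP => /eqP E; by apply: Ha; rewrite -E.
have C : forall y : seq 'I_sigma, 0 < size y <= k -> is_right_ext w y.
  case=> [|z t] //= Ht.
  have [b bna] := Hb (last z t).
  apply/existsP; exists b; rewrite bna !Pad // size_belast //.
have memR : forall y : seq 'I_sigma, (y \in right_exts w) = (0 < size y <= k).
  move=> y; rewrite /right_exts mem_filter; apply/andP/idP.
  - case=> + _; case: y => [|z t] //; rewrite /is_right_ext; cbv zeta; case/existsP => b /and3P [bna H1 H2].
    rewrite /= ltnNge; apply/negP => Hkt.
    have := D _ _ _ H1 H2; rewrite size_belast => /(_ Hkt) E.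
    by rewrite E eqxx in bna.
  - move=> Hy; split; first exact: C.
    apply: infix_substrings; case: y Hy => [|z t] //= Ht.
    by rewrite lastI; apply: Pad; rewrite size_belast.
have memS : forall y : seq 'I_sigma, (y \in super_max_exts w) = (size y == k).
  move=> y; rewrite /super_max_exts mem_filter memR andbC.
  apply/andP/eqP.
  - case=> /andP[y0 yk] /allP Hall; apply/eqP; rewrite eqn_leq yk /= leqNgt.
    apply/negP => ylt.
    case: y y0 yk Hall ylt => [|z t] // _ yk Hall ylt.
    have H1 : 0 < size (nseq (k - size (z :: t)) z ++ z :: t) <= k.
      rewrite size_cat size_nseq /=; rewrite /= in ylt; move: (size t) ylt => m ylt; apply/andP; split; lia.
    have := Hall _ (etrans (memR _) H1); rewrite suffix_suffix /= => /eqP /(congr1 size).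
    rewrite size_cat size_nseq /=; rewrite /= in ylt; move: (size t) ylt => m ylt; lia.
  - move=> yk; split; first by apply/andP; split; lia.
    apply/allP => y'; rewrite memR => /andP[_ y'k]; apply/implyP => suf.
    by apply/eqP; symmetry; apply: suffix_same_size; rewrite // yk.
have U1 : uniq (super_max_exts w) by rewrite /super_max_exts /right_exts !filter_uniq // undup_uniq.
have P : perm_eq (super_max_exts w) (map val (enum {: k.-tuple 'I_sigma})).
  apply: uniq_perm => //.
    rewrite map_inj_uniq ?enum_uniq //; exact: val_inj.
  move=> y; rewrite memS; apply/eqP/mapP.
  - move=> yk; have yk' : size y == k by apply/eqP.
    by exists (Tuple yk'); rewrite ?mem_enum.
  - by case=> t _ ->; exact: size_tuple.
by rewrite /sre (perm_size P) size_map -cardE card_tuple card_ord.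
Qed.
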